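(* Let $C$ be a configuration of the (substitution-based) Krivine Abstract Machine (KAM) and let $[\![\cdot]\!]$ be the translation of KAM configurations into HOcore described in the context. In the forward direction, if $C \to^{*} C'$, then $[\![C]\!] \Rightarrow [\![C']\!]$ (a sequence of zero or more $\tau$-transitions). In the backward direction, if $[\![C]\!] \Rightarrow P$, then there exists a configuration $C'$ such that $C \to^{*} C'$ and either (i) $P = [\![C']\!]$, or (ii) there exists $P'$ such that $P \xrightarrow{\tau} P' = [\![C']\!]$, or (iii) $C' = \langle \lambda x.t, [] \rangle$ for some $x,t$ and $P = hd(x).[\![t]\!] \parallel \overline{b}\langle 0\rangle$.
   Context: HOcore processes are given by $P,Q ::= a(x).P \mid \overline{a}\langle P\rangle \mid P \parallel Q \mid x \mid 0$, where $a,b,\dots$ are channel names and $x,y,\dots$ are process variables; $a(x).P$ binds $x$ in $P$; parallel composition is associative and commutative with unit $0$; processes are considered up to $\alpha$-conversion. The labelled transition system has labels $\tau$, $\overline{a}\langle P\rangle$ and $a(P)$, with rules: $\overline{a}\langle P\rangle \xrightarrow{\overline{a}\langle P\rangle} 0$; $a(x).Q \xrightarrow{a(P)} Q\{P/x\}$ (capture-avoiding substitution); if $P \xrightarrow{l} P'$ then $P\parallel Q \xrightarrow{l} P'\parallel Q$ and $Q \parallel P \xrightarrow{l} Q \parallel P'$; if $P \xrightarrow{\overline{a}\langle R\rangle} P'$ and $Q \xrightarrow{a(R)} Q'$ then $P \parallel Q \xrightarrow{\tau} P'\parallel Q'$ and $Q\parallel P \xrightarrow{\tau} Q' \parallel P'$.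 $\Rightarrow$ denotes the reflexive transitive closure of $\xrightarrow{\tau}$. KAM: terms $t,s ::= x \mid t\,s \mid \lambda x.t$; stacks $\pi ::= t :: \pi \mid []$; configurations $C ::= \langle t, \pi\rangle$, where all terms are closed. Transitions: $\langle t\,s, \pi\rangle \to \langle t, s :: \pi\rangle$ and $\langle \lambda x.t, s::\pi\rangle \to \langle t\{s/x\}, \pi\rangle$. $\to^*$ is the reflexive transitive closure. Translation (with $c, hd, b$ fixed channel names, $\lambda$-term variables translated as HOcore process variables, and $p$ a variable not occurring in translated entities): $[\![[]]\!] = \overline{b}\langle 0\rangle$; $[\![t::\pi]\!] = \overline{hd}\langle [\![t]\!]\rangle \parallel \overline{c}\langle [\![\pi]\!]\rangle$; $[\![\langle t,\pi\rangle]\!] = [\![t]\!] \parallel \overline{c}\langle[\![\pi]\!]\rangle$; $[\![t\,s]\!] = c(p).([\![t]\!] \parallel \overline{c}\langle \overline{hd}\langle[\![s]\!]\rangle \parallel \overline{c}\langle p\rangle\rangle)$; $[\![\lambda x.t]\!] = c(p).(hd(x).[\![t]\!] \parallel p)$; $[\![x]\!] = x$. *)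

(* Defs.v *)
(* Bound variables (of HOcore processes and of lambda
   terms) are represented with de Bruijn indices, so processes and terms
   are automatically identified up to alpha-conversion. *)
From Stdlib Require Import Arith List Relations.
Import ListNotations.

Definition chan := nat.

Inductive proc : Type :=
| PVar : nat -> proc
| PIn  : chan -> proc -> proc      (* a(x).P, binds index 0 in P *)
| POut : chan -> proc -> proc
| PPar : proc -> proc -> proc
| PNil : proc.

Fixpoint plift (k : nat) (P : proc) : proc :=
  match P with
  | PVar n => PVar (if k <=? n then S n else n)
  | PIn a Q => PIn a (plift (S k) Q)
  | POut a Q => POut a (plift k Q)
  | PPar Q R => PPar (plift k Q) (plift k R)
  | PNil => PNil
  end.

(* psubst k R P : capture-avoiding substitution of R for variable k in P
   (variables above k are decremented, as the binder disappears) *)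
Fixpoint psubst (k : nat) (R : proc) (P : proc) : proc :=
  match P with
  | PVar n =>
      if n <? k then PVar n
      else if n =? k then Nat.iter k (plift 0) R
      else PVar (pred n)
  | PIn a Q => PIn a (psubst (S k) R Q)
  | POut a Q => POut a (psubst k R Q)
  | PPar Q1 Q2 => PPar (psubst k R Q1) (psubst k R Q2)
  | PNil => PNil
  end.

(* Q{P/x} where x is the variable bound by the input prefix *)
Definition inst (Q P : proc) : proc := psubst 0 P Q.

Inductive scong : proc -> proc -> Prop :=
| sc_refl  : forall P, scong P P
| sc_sym   : forall P Q, scong P Q -> scong Q P
| sc_trans : forall P Q R, scong P Q -> scong Q R -> scong P R
| sc_in    : forall a P Q, scong P Q -> scong (PIn a P) (PIn a Q)
| sc_out   : forall a P Q, scong P Q -> scong (POut a P) (POut a Q)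
| sc_par   : forall P P' Q Q', scong P P' -> scong Q Q' ->
               scong (PPar P Q) (PPar P' Q')
| sc_assoc : forall P Q R, scong (PPar P (PPar Q R)) (PPar (PPar P Q) R)
| sc_comm  : forall P Q, scong (PPar P Q) (PPar Q P)
| sc_unit  : forall P, scong (PPar P PNil) P.

Inductive label : Type :=
| LTau : label
| LOut : chan -> proc -> label
| LIn  : chan -> proc -> label.

Inductive lts : proc -> label -> proc -> Prop :=
| lts_out : forall a P, lts (POut a P) (LOut a P) PNil
| lts_in  : forall a Q P, lts (PIn a Q) (LIn a P) (inst Q P)
| lts_parL : forall P Q l P', lts P l P' -> lts (PPar P Q) l (PPar P' Q)
| lts_parR : forall P Q l P', lts P l P' -> lts (PPar Q P) l (PPar Q P')
| lts_comL : forall P Q R a P' Q', lts P (LOut a R) P' -> lts Q (LIn a R) Q' ->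
               lts (PPar P Q) LTau (PPar P' Q')
| lts_comR : forall P Q R a P' Q', lts P (LOut a R) P' -> lts Q (LIn a R) Q' ->
               lts (PPar Q P) LTau (PPar Q' P').

Definition tau_step (P Q : proc) : Prop :=
  exists P0 Q0, scong P P0 /\ lts P0 LTau Q0 /\ scong Q0 Q.

Definition tau_star : proc -> proc -> Prop :=
  clos_refl_trans proc (fun P Q => scong P Q \/ tau_step P Q).

Inductive term : Type :=
| TVar : nat -> term
| TApp : term -> term -> term
| TLam : term -> term.

Fixpoint tlift (k : nat) (t : term) : term :=
  match t with
  | TVar n => TVar (if k <=? n then S n else n)
  | TApp t1 t2 => TApp (tlift k t1) (tlift k t2)
  | TLam t1 => TLam (tlift (S k) t1)
  end.

Fixpoint tsubst (k : nat) (s : term) (t : term) : term :=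
  match t with
  | TVar n =>
      if n <? k then TVar n
      else if n =? k then Nat.iter k (tlift 0) s
      else TVar (pred n)
  | TApp t1 t2 => TApp (tsubst k s t1) (tsubst k s t2)
  | TLam t1 => TLam (tsubst (S k) s t1)
  end.

Fixpoint closed_at (k : nat) (t : term) : Prop :=
  match t with
  | TVar n => n < k
  | TApp t1 t2 => closed_at k t1 /\ closed_at k t2
  | TLam t1 => closed_at (S k) t1
  end.

Definition closed (t : term) : Prop := closed_at 0 t.

Definition stack := list term.

Definition config : Type := (term * stack)%type.

Definition closed_config (C : config) : Prop :=
  closed (fst C) /\ Forall closed (snd C).

Inductive kam_step : config -> config -> Prop :=
| kam_push : forall t s pi, kam_step (TApp t s, pi) (t, s :: pi)
| kam_grab : forall t s pi, kam_step (TLam t, s :: pi) (tsubst 0 s t, pi).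

Definition kam_star : config -> config -> Prop :=
  clos_refl_trans config kam_step.

Definition ch_c : chan := 0.
Definition ch_hd : chan := 1.
Definition ch_b : chan := 2.

(* [[x]] = x
   [[t s]] = c(p).([[t]] || c<ch_hd<[[s]]> || c<p>>)
   [[\x.t]] = c(p).(ch_hd(x).[[t]] || p)
   with p fresh: in de Bruijn form p is index 0 under the c-binder, and the
   translated subterms are lifted so as not to be captured by it. *)
Fixpoint tr (t : term) : proc :=
  match t with
  | TVar n => PVar n
  | TApp t1 t2 =>
      PIn ch_c (PPar (plift 0 (tr t1))
                  (POut ch_c (PPar (POut ch_hd (plift 0 (tr t2))) (POut ch_c (PVar 0)))))
  | TLam t1 => PIn ch_c (PPar (PIn ch_hd (plift 1 (tr t1))) (PVar 0))
  end.

Fixpoint tr_stack (pi : stack) : proc :=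
  match pi with
  | [] => POut ch_b PNil
  | t :: pi' => PPar (POut ch_hd (tr t)) (POut ch_c (tr_stack pi'))
  end.

Definition tr_config (C : config) : proc :=
  PPar (tr (fst C)) (POut ch_c (tr_stack (snd C))).

(* Main.v *)
Require Import Defs.
From Stdlib Require Import List.
Import ListNotations.
From Stdlib Require Import Arith Lia Relations Permutation.

Lemma plift_plift : forall P j k, j <= k ->
  plift (S k) (plift j P) = plift j (plift k P).
Proof.
  induction P; intros j k Hjk; cbn [plift]; try (f_equal; auto with arith; fail).
  - f_equal. destruct (Nat.leb_spec j n); destruct (Nat.leb_spec k n).
    all: repeat match goal with |- context [?a <=? ?b] => destruct (Nat.leb_spec a b) end; lia.
Qed.

Lemma tr_tlift : forall t k, tr (tlift k t) = plift k (tr t).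
Proof.
  induction t; intros k; simpl.
  - reflexivity.
  - rewrite IHt1, IHt2. rewrite !(plift_plift _ 0 k) by lia. reflexivity.
  - rewrite IHt. rewrite (plift_plift _ 1 (S k)) by lia. reflexivity.
Qed.

Lemma tr_iter : forall n s, tr (Nat.iter n (tlift 0) s) = Nat.iter n (plift 0) (tr s).
Proof.
  induction n; intros s; simpl; auto. rewrite tr_tlift, IHn. reflexivity.
Qed.

Lemma plift_iter : forall k j R, j <= k ->
  plift j (Nat.iter k (plift 0) R) = plift 0 (Nat.iter k (plift 0) R).
Proof.
  induction k; intros j R H.
  - assert (j = 0) by lia. subst. reflexivity.
  - destruct j. reflexivity.
    simpl. rewrite (plift_plift _ 0 j) by lia. rewrite IHk by lia. reflexivity.
Qed.

Lemma psubst_plift : forall P j k R, j <= k ->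
  psubst (S k) R (plift j P) = plift j (psubst k R P).
Proof.
  induction P; intros j k R Hjk.
  2: simpl; f_equal; apply IHP; lia.
  2: simpl; f_equal; apply IHP; lia.
  2: simpl; f_equal; auto.
  2: reflexivity.
  cbn [plift psubst]. destruct (Nat.leb_spec j n).
  all: destruct (Nat.ltb_spec n k); destruct (Nat.eqb_spec n k); try (exfalso; lia).
  all: repeat (match goal with
   | |- context [?a <? ?b] => destruct (Nat.ltb_spec a b)
   | |- context [?a =? ?b] => destruct (Nat.eqb_spec a b)
   | |- context [?a <=? ?b] => destruct (Nat.leb_spec a b) end); cbn [plift]; try (exfalso; lia).
  all: repeat (match goal with
   | |- context [?a <=? ?b] => destruct (Nat.leb_spec a b) end); try (exfalso; lia);
   try (f_equal; lia).
  all: try (subst; symmetry; apply plift_iter; lia).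
Qed.

Lemma psubst_plift_same : forall P k R, psubst k R (plift k P) = P.
Proof.
  induction P; intros k R; simpl; try (f_equal; auto; fail).
  - destruct (k <=? n) eqn:E; [apply Nat.leb_le in E|apply Nat.leb_gt in E].
    + assert (S n <? k = false) by (apply Nat.ltb_ge; lia). rewrite H.
      assert (S n =? k = false) by (apply Nat.eqb_neq; lia). rewrite H0. reflexivity.
    + assert (n <? k = true) by (apply Nat.ltb_lt; lia). rewrite H. reflexivity.
Qed.

Lemma tr_tsubst : forall t k s, tr (tsubst k s t) = psubst k (tr s) (tr t).
Proof.
  induction t; intros k s; simpl.
  - destruct (n <? k); [reflexivity|]. destruct (n =? k); [apply tr_iter|reflexivity].
  - rewrite IHt1, IHt2. rewrite !(psubst_plift _ 0 k) by lia. reflexivity.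
  - rewrite IHt. rewrite (psubst_plift _ 1 (S k)) by lia. reflexivity.
Qed.

Fixpoint flat (P : proc) : list proc :=
  match P with
  | PPar P Q => flat P ++ flat Q
  | PNil => []
  | x => [x]
  end.

Fixpoint par_list (l : list proc) : proc :=
  match l with
  | [] => PNil
  | x :: l => PPar x (par_list l)
  end.

Lemma par_app : forall l1 l2,
  scong (par_list (l1 ++ l2)) (PPar (par_list l1) (par_list l2)).
Proof.
  induction l1; intros l2; simpl.
  - eapply sc_trans; [apply sc_sym, sc_unit|apply sc_comm].
  - eapply sc_trans; [apply sc_par; [apply sc_refl|apply IHl1]|apply sc_assoc].
Qed.

Lemma par_flat : forall P, scong P (par_list (flat P)).
Proof.
  induction P; simpl; try (apply sc_sym, sc_unit); try apply sc_refl.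
  eapply sc_trans; [apply sc_par; eauto|]. apply sc_sym, par_app.
Qed.

Lemma par_perm : forall l l', Permutation l l' -> scong (par_list l) (par_list l').
Proof.
  induction 1; simpl.
  - apply sc_refl.
  - apply sc_par; [apply sc_refl|auto].
  - eapply sc_trans; [apply sc_assoc|].
    eapply sc_trans; [apply sc_par; [apply sc_comm|apply sc_refl]|].
    apply sc_sym, sc_assoc.
  - eapply sc_trans; eauto.
Qed.

Lemma scong_perm : forall A B, Permutation (flat A) (flat B) -> scong A B.
Proof.
  intros A B H. eapply sc_trans; [apply par_flat|].
  eapply sc_trans; [apply par_perm; eauto|]. apply sc_sym, par_flat.
Qed.

Inductive teq : proc -> proc -> Prop :=
| teq_refl : forall x, teq x x
| teq_in : forall a P Q, scong P Q -> teq (PIn a P) (PIn a Q)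
| teq_out : forall a P Q, scong P Q -> teq (POut a P) (POut a Q).

Lemma teq_sym : forall x y, teq x y -> teq y x.
Proof. destruct 1; constructor; apply sc_sym; auto. Qed.

Lemma teq_trans : forall x y z, teq x y -> teq y z -> teq x z.
Proof.
  intros x y z H1 H2; destruct H1; inversion H2; subst; try constructor; auto;
  eapply sc_trans; eauto.
Qed.

Lemma teq_scong : forall x y, teq x y -> scong x y.
Proof. destruct 1. apply sc_refl. apply sc_in; auto. apply sc_out; auto. Qed.

Lemma Forall2_teq_par : forall l l', Forall2 teq l l' -> scong (par_list l) (par_list l').
Proof.
  induction 1; simpl. apply sc_refl. apply sc_par; auto. apply teq_scong; auto.
Qed.

Definition leq (l1 l2 : list proc) := exists m, Forall2 teq l1 m /\ Permutation m l2.

Lemma Forall2_teq_refl : forall l, Forall2 teq l l.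
Proof. induction l; constructor; auto. constructor. Qed.

Lemma Forall2_teq_trans : forall l1 l2 l3, Forall2 teq l1 l2 -> Forall2 teq l2 l3 -> Forall2 teq l1 l3.
Proof.
  intros l1 l2 l3 H; revert l3; induction H; intros l3 H'; inversion H'; subst; constructor;
  eauto using teq_trans.
Qed.

Lemma Forall2_teq_sym : forall l1 l2, Forall2 teq l1 l2 -> Forall2 teq l2 l1.
Proof. induction 1; constructor; auto using teq_sym. Qed.

Lemma leq_refl : forall l, leq l l.
Proof. intros l; exists l; split; auto using Forall2_teq_refl. Qed.

Lemma leq_sym : forall l1 l2, leq l1 l2 -> leq l2 l1.
Proof.
  intros l1 l2 [m [H1 H2]].
  destruct (Permutation_Forall2 H2 (Forall2_teq_sym _ _ H1)) as [m' [Hp Hf]].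
  exists m'; split; auto. apply Permutation_sym; auto.
Qed.

Lemma leq_trans : forall l1 l2 l3, leq l1 l2 -> leq l2 l3 -> leq l1 l3.
Proof.
  intros l1 l2 l3 [m1 [H1 H2]] [m2 [H3 H4]].
  destruct (Permutation_Forall2 (Permutation_sym H2) H3) as [m' [Hp Hf]].
  exists m'; split. eapply Forall2_teq_trans; eauto.
  eapply Permutation_trans; [apply Permutation_sym; eauto|auto].
Qed.

Lemma scong_flat : forall P Q, scong P Q -> leq (flat P) (flat Q).
Proof.
  induction 1; simpl.
  - apply leq_refl.
  - apply leq_sym; auto.
  - eapply leq_trans; eauto.
  - exists [PIn a Q]; split; auto. constructor; [apply teq_in; auto|constructor].
  - exists [POut a Q]; split; auto. constructor; [apply teq_out; auto|constructor].
  - destruct IHscong1 as [m1 [A1 B1]], IHscong2 as [m2 [A2 B2]].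
    exists (m1 ++ m2); split. apply Forall2_app; auto. apply Permutation_app; auto.
  - rewrite app_assoc. apply leq_refl.
  - exists (flat P ++ flat Q); split. apply Forall2_teq_refl. apply Permutation_app_comm.
  - rewrite app_nil_r. apply leq_refl.
Qed.

Lemma plift_scong : forall P Q k, scong P Q -> scong (plift k P) (plift k Q).
Proof.
  intros P Q k H; revert k; induction H; intros k; simpl.
  - apply sc_refl.
  - apply sc_sym; auto.
  - eapply sc_trans; eauto.
  - apply sc_in; auto.
  - apply sc_out; auto.
  - apply sc_par; auto.
  - apply sc_assoc.
  - apply sc_comm.
  - apply sc_unit.
Qed.

Lemma psubst_scong_l : forall P Q k R, scong P Q -> scong (psubst k R P) (psubst k R Q).
Proof.
  intros P Q k R H; revert k; induction H; intros k; simpl.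
  - apply sc_refl.
  - apply sc_sym; auto.
  - eapply sc_trans; eauto.
  - apply sc_in; auto.
  - apply sc_out; auto.
  - apply sc_par; auto.
  - apply sc_assoc.
  - apply sc_comm.
  - apply sc_unit.
Qed.

Lemma iter_scong : forall n R R', scong R R' ->
  scong (Nat.iter n (plift 0) R) (Nat.iter n (plift 0) R').
Proof. induction n; intros; simpl; auto. apply plift_scong; auto. Qed.

Lemma psubst_scong_r : forall P k R R', scong R R' -> scong (psubst k R P) (psubst k R' P).
Proof.
  induction P; intros k R R' H; simpl.
  - destruct (n <? k). apply sc_refl. destruct (n =? k). apply iter_scong; auto. apply sc_refl.
  - apply sc_in; auto.
  - apply sc_out; auto.
  - apply sc_par; auto.
  - apply sc_refl.
Qed.

Lemma inst_scong : forall B B' R R', scong B B' -> scong R R' ->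
  scong (inst B R) (inst B' R').
Proof.
  intros. unfold inst. eapply sc_trans. apply psubst_scong_l; eauto. apply psubst_scong_r; auto.
Qed.

Definition LP (l : label) (P Q : proc) : Prop :=
  match l with
  | LTau => exists a R B Rest, Permutation (flat P) (POut a R :: PIn a B :: flat Rest)
                               /\ scong Q (PPar (inst B R) Rest)
  | LOut a R => exists Rest, Permutation (flat P) (POut a R :: flat Rest) /\ scong Q Rest
  | LIn a R => exists B Rest, Permutation (flat P) (PIn a B :: flat Rest)
                              /\ scong Q (PPar (inst B R) Rest)
  end.

Lemma lts_LP : forall P l Q, lts P l Q -> LP l P Q.
Proof.
  induction 1; simpl.
  - exists PNil; split; simpl; auto. apply sc_refl.
  - exists Q, PNil; split; simpl; auto. apply sc_sym, sc_unit.
  - destruct l; simpl in *.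
    + destruct IHlts as [a [R [B [Rest [H1 H2]]]]].
      exists a, R, B, (PPar Rest Q); split; simpl.
      * change (POut a R :: PIn a B :: flat Rest ++ flat Q) with
          ((POut a R :: PIn a B :: flat Rest) ++ flat Q). apply Permutation_app; auto.
      * eapply sc_trans; [apply sc_par; [eauto|apply sc_refl]|]. apply sc_sym, sc_assoc.
    + destruct IHlts as [Rest [H1 H2]]. exists (PPar Rest Q); split; simpl.
      * change (POut c p :: flat Rest ++ flat Q) with ((POut c p :: flat Rest) ++ flat Q).
        apply Permutation_app; auto.
      * apply sc_par; auto. apply sc_refl.
    + destruct IHlts as [B [Rest [H1 H2]]]. exists B, (PPar Rest Q); split; simpl.
      * change (PIn c B :: flat Rest ++ flat Q) with ((PIn c B :: flat Rest) ++ flat Q).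
        apply Permutation_app; auto.
      * eapply sc_trans; [apply sc_par; [eauto|apply sc_refl]|]. apply sc_sym, sc_assoc.
  - destruct l; simpl in *.
    + destruct IHlts as [a [R [B [Rest [H1 H2]]]]].
      exists a, R, B, (PPar Q Rest); split; simpl.
      * eapply Permutation_trans; [apply Permutation_app; [apply Permutation_refl|eauto]|].
        eapply Permutation_trans; [apply Permutation_sym, Permutation_middle|].
        apply perm_skip. apply Permutation_sym, Permutation_middle.
      * eapply sc_trans; [apply sc_par; [apply sc_refl|eauto]|].
        apply scong_perm; simpl.
        rewrite app_assoc. rewrite (app_assoc (flat (inst B _))).
        apply Permutation_app; [apply Permutation_app_comm|apply Permutation_refl].
    + destruct IHlts as [Rest [H1 H2]]. exists (PPar Q Rest); split; simpl.
      * eapply Permutation_trans; [apply Permutation_app; [apply Permutation_refl|eauto]|].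
        apply Permutation_sym, Permutation_middle.
      * apply sc_par; auto. apply sc_refl.
    + destruct IHlts as [B [Rest [H1 H2]]]. exists B, (PPar Q Rest); split; simpl.
      * eapply Permutation_trans; [apply Permutation_app; [apply Permutation_refl|eauto]|].
        apply Permutation_sym, Permutation_middle.
      * eapply sc_trans; [apply sc_par; [apply sc_refl|eauto]|].
        apply scong_perm; simpl.
        rewrite app_assoc. rewrite (app_assoc (flat (inst B _))).
        apply Permutation_app; [apply Permutation_app_comm|apply Permutation_refl].
  - destruct IHlts1 as [RP [H1 H2]]. destruct IHlts2 as [B [RQ [H3 H4]]].
    exists a, R, B, (PPar RP RQ); split; simpl.
    + eapply Permutation_trans; [apply Permutation_app; eauto|]. simpl.
      apply perm_skip. apply Permutation_sym, Permutation_middle.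
    + eapply sc_trans; [apply sc_par; eauto|].
      apply scong_perm; simpl.
      rewrite !app_assoc. apply Permutation_app; [|apply Permutation_refl].
      apply Permutation_app_comm.
  - destruct IHlts1 as [RP [H1 H2]]. destruct IHlts2 as [B [RQ [H3 H4]]].
    exists a, R, B, (PPar RQ RP); split; simpl.
    + eapply Permutation_trans; [apply Permutation_app; eauto|]. simpl.
      eapply Permutation_trans; [apply perm_skip, Permutation_sym, Permutation_middle|].
      apply perm_swap.
    + eapply sc_trans; [apply sc_par; eauto|].
      apply sc_sym, sc_assoc.
Qed.

Lemma tau_canon : forall X P0 Q0, scong X P0 -> lts P0 LTau Q0 ->
  exists a R B rest, Permutation (flat X) (POut a R :: PIn a B :: rest) /\
    scong Q0 (PPar (inst B R) (par_list rest)).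
Proof.
  intros X P0 Q0 HX Hl.
  destruct (lts_LP _ _ _ Hl) as [a [R [B [Rest [H1 H2]]]]].
  destruct (scong_flat _ _ (sc_sym _ _ HX)) as [m [Hf Hp]].
  destruct (Permutation_Forall2 H1 Hf) as [m' [Hp' Hf']].
  inversion Hf' as [|o o' l1 l1' Ho Hf2]; subst.
  inversion Hf2 as [|i i' l2 l2' Hi Hf3]; subst.
  assert (exists R', o' = POut a R' /\ scong R R') as [R' [-> HR]]
    by (inversion Ho; subst; eauto using sc_refl).
  assert (exists B', i' = PIn a B' /\ scong B B') as [B' [-> HB]]
    by (inversion Hi; subst; eauto using sc_refl).
  exists a, R', B', l2'; split.
  - eapply Permutation_trans; [apply Permutation_sym; eauto|auto].
  - eapply sc_trans; eauto. apply sc_par. apply inst_scong; auto.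
    eapply sc_trans; [apply par_flat|]. apply Forall2_teq_par; auto.
Qed.

Lemma tau_step_l : forall P X Y, scong P X -> tau_step X Y -> tau_step P Y.
Proof.
  intros P X Y H [P0 [Q0 [H1 [H2 H3]]]]. exists P0, Q0; repeat split; auto.
  eapply sc_trans; eauto.
Qed.

Lemma inst_app : forall t1 t2 pi,
  inst (PPar (plift 0 (tr t1))
          (POut ch_c (PPar (POut ch_hd (plift 0 (tr t2))) (POut ch_c (PVar 0)))))
       (tr_stack pi) = tr_config (t1, t2 :: pi).
Proof.
  intros. unfold inst. simpl. rewrite !psubst_plift_same. reflexivity.
Qed.

Lemma inst_lam : forall t pi,
  inst (PPar (PIn ch_hd (plift 1 (tr t))) (PVar 0)) (tr_stack pi)
  = PPar (PIn ch_hd (tr t)) (tr_stack pi).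
Proof.
  intros. unfold inst. simpl. rewrite !psubst_plift_same. reflexivity.
Qed.

Lemma step_A : forall t pi B,
  tr t = PIn ch_c B ->
  tau_step (tr_config (t, pi)) (inst B (tr_stack pi)).
Proof.
  intros t pi B H. unfold tr_config. simpl. rewrite H.
  exists (PPar (PIn ch_c B) (POut ch_c (tr_stack pi))), (PPar (inst B (tr_stack pi)) PNil).
  split; [apply sc_refl|split; [|apply sc_unit]].
  eapply lts_comR; constructor.
Qed.

Lemma step_B : forall t s pi,
  tau_step (PPar (PIn ch_hd (tr t)) (PPar (POut ch_hd (tr s)) (POut ch_c (tr_stack pi))))
           (tr_config (tsubst 0 s t, pi)).
Proof.
  intros.
  exists (PPar (PPar (PIn ch_hd (tr t)) (POut ch_hd (tr s))) (POut ch_c (tr_stack pi))),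
         (PPar (PPar (inst (tr t) (tr s)) PNil) (POut ch_c (tr_stack pi))).
  split; [apply sc_assoc|split].
  - apply lts_parL. eapply lts_comR; constructor.
  - unfold tr_config; simpl. rewrite tr_tsubst. apply sc_par; [apply sc_unit|apply sc_refl].
Qed.

Definition canon (C : config) (X : proc) : Prop :=
  X = tr_config C \/
  (exists t s pi, C = (TLam t, s :: pi) /\
     X = PPar (PIn ch_hd (tr t)) (PPar (POut ch_hd (tr s)) (POut ch_c (tr_stack pi)))) \/
  (exists t, C = (TLam t, []) /\ X = PPar (PIn ch_hd (tr t)) (POut ch_b PNil)).

Ltac in_cases H := simpl in H; repeat destruct H as [H|H]; try discriminate; try contradiction;
  try (injection H; intros; subst; clear H).

Ltac chan_neq := match goal with H : ?x = ?y |- _ =>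
  unfold ch_c, ch_hd, ch_b in H; discriminate H end.

Lemma perm_rest : forall (o i : proc) rest r0 l,
  Permutation l (o :: i :: rest) -> Permutation l (o :: i :: r0) ->
  scong (par_list rest) (par_list r0).
Proof.
  intros o i rest r0 l H1 H2. apply par_perm.
  apply (Permutation_cons_inv (a:=i)). apply (Permutation_cons_inv (a:=o)).
  eapply Permutation_trans; [apply Permutation_sym; eauto|eauto].
Qed.

Lemma canon_step : forall C1 X P0 Q0, canon C1 X -> scong X P0 -> lts P0 LTau Q0 ->
  exists C2 Y, kam_star C1 C2 /\ canon C2 Y /\ scong Q0 Y.
Proof.
  intros C1 X P0 Q0 Hc HX Hl.
  destruct (tau_canon _ _ _ HX Hl) as [a [R [B [rest [Hp HQ]]]]].
  assert (Ho : In (POut a R) (flat X)) by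
    (apply (Permutation_in _ (Permutation_sym Hp)); simpl; auto).
  assert (Hi : In (PIn a B) (flat X)) by
    (apply (Permutation_in _ (Permutation_sym Hp)); simpl; auto).
  destruct Hc as [->|[[t [s [pi [-> ->]]]]|[t [-> ->]]]].
  - destruct C1 as [t pi]. destruct t as [n|t1 t2|t]; unfold tr_config in *; simpl in Ho, Hi, Hp.
    + in_cases Hi.
    + in_cases Ho. in_cases Hi.
      assert (Hr := perm_rest _ _ _ [] _ Hp (perm_swap _ _ _)).
      exists (t1, t2 :: pi), (tr_config (t1, t2 :: pi)); split; [|split].
      * apply rt_step, kam_push.
      * left; auto.
      * eapply sc_trans; [eauto|]. rewrite inst_app.
        eapply sc_trans; [apply sc_par; [apply sc_refl|apply Hr]|apply sc_unit].
    + in_cases Ho. in_cases Hi.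
      assert (Hr := perm_rest _ _ _ [] _ Hp (perm_swap _ _ _)).
      exists (TLam t, pi), (PPar (PIn ch_hd (tr t)) (tr_stack pi)); split; [|split].
      * apply rt_refl.
      * right. destruct pi as [|s pi]; [right|left]; eauto.
      * eapply sc_trans; [eauto|]. rewrite inst_lam.
        eapply sc_trans; [apply sc_par; [apply sc_refl|apply Hr]|apply sc_unit].
  - simpl in Ho, Hi, Hp. in_cases Ho; in_cases Hi; try chan_neq.
    assert (Hr := perm_rest _ _ _ [POut ch_c (tr_stack pi)] _ Hp
                   (perm_trans (perm_swap _ _ _) (Permutation_refl _))).
    exists (tsubst 0 s t, pi), (tr_config (tsubst 0 s t, pi)); split; [|split].
    + apply rt_step, kam_grab.
    + left; auto.
    + eapply sc_trans; [eauto|]. unfold tr_config; simpl. rewrite tr_tsubst.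
      apply sc_par; [apply sc_refl|]. eapply sc_trans; [apply Hr|]. simpl. apply sc_unit.
  - simpl in Ho, Hi, Hp. in_cases Ho; in_cases Hi; chan_neq.
Qed.

Definition Inv (C : config) (P : proc) : Prop :=
  exists C' X, kam_star C C' /\ canon C' X /\ scong P X.

Lemma Inv_step : forall C P Q, Inv C P -> scong P Q \/ tau_step P Q -> Inv C Q.
Proof.
  intros C P Q [C' [X [Hk [Hc HP]]]] [H|[P0 [Q0 [H1 [H2 H3]]]]].
  - exists C', X; repeat split; auto. eapply sc_trans; [apply sc_sym; eauto|auto].
  - assert (HX : scong X P0) by (eapply sc_trans; [apply sc_sym; eauto|auto]).
    destruct (canon_step _ _ _ _ Hc HX H2) as [C2 [Y [Hk2 [Hc2 HQ]]]].
    exists C2, Y; repeat split; auto.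
    + eapply rt_trans; eauto.
    + eapply sc_trans; [apply sc_sym; eauto|auto].
Qed.

Lemma kam_tau : forall C1 C2, kam_step C1 C2 -> tau_star (tr_config C1) (tr_config C2).
Proof.
  intros C1 C2 H; destruct H.
  - apply rt_step; right. rewrite <- inst_app. apply step_A. reflexivity.
  - eapply rt_trans; [apply rt_step; right; apply step_A; reflexivity|].
    rewrite inst_lam. apply rt_step; right. apply step_B.
Qed.

Theorem theorem3p1 :
  forall C : config, closed_config C ->
    (forall C', kam_star C C' -> tau_star (tr_config C) (tr_config C')) /\
    (forall P, tau_star (tr_config C) P ->
       exists C', kam_star C C' /\
         (scong P (tr_config C') \/
          (exists P', tau_step P P' /\ scong P' (tr_config C')) \/
          (exists t, C' = (TLam t, []) /\
                     scong P (PPar (PIn ch_hd (tr t)) (POut ch_b PNil))))).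
Proof.
  intros C _. split.
  - intros C' H. induction H.
    + apply kam_tau; auto.
    + apply rt_refl.
    + eapply rt_trans; eauto.
  - intros P H.
    assert (HI : Inv C P).
    { assert (HI0 : Inv C (tr_config C)).
      { exists C, (tr_config C); repeat split. apply rt_refl. left; auto. apply sc_refl. }
      revert HI0. apply clos_rt_rt1n in H. induction H as [|x y z Hxy Hyz IH]; intros HI0; auto.
      apply IH. eapply Inv_step; eauto. }
    destruct HI as [C' [X [Hk [Hc HP]]]].
    destruct Hc as [->|[[t [s [pi [-> ->]]]]|[t [-> ->]]]].
    + exists C'; split; auto.
    + exists (tsubst 0 s t, pi); split.
      * eapply rt_trans; [eauto|apply rt_step, kam_grab].
      * right; left. exists (tr_config (tsubst 0 s t, pi)); split; [|apply sc_refl].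
        eapply tau_step_l; [eauto|apply step_B].
    + exists (TLam t, []); split; auto. right; right. eauto.
Qed.
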